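(* For every $n\in\mathbb N$, the normal PO-dilators $\mathbb{T}_n$ and $\mathbb{T}_{n+1}^-$ are normal WPO-dilators, i.e. $\mathbb{T}_n(X)$ and $\mathbb{T}_{n+1}^-(X)$ are well partial orders whenever $X$ is a well partial order.
   Context: A well partial order is a partial order in which every infinite sequence $x_0,x_1,\dots$ has indices $i<j$ with $x_i\leq x_j$. For a partial order $X$, $M(X)$ is the set of finite multisets $[x_0,\dots,x_{m-1}]$ with elements from $X$, ordered by $[x_0,\dots,x_{m-1}]\leq_{M(X)}[y_0,\dots,y_{k-1}]$ iff there is an injection $g$ with $x_i\leq_X y_{g(i)}$ for all $i<m$. For $n\in\mathbb N$ and a partial order $X$, $\mathbb{T}_n(X)$ is generated by: $\overline x$ for each $x\in X$; $i\star\sigma$ for each $\sigma=[t_0,\dots,t_{m-1}]\in M(\mathbb{T}_n(X))$ and $i<n$. For $n>0$, $\mathbb{T}_n^-(X)=\{\overline x\mid x\in X\}\cup\{0\star\sigma\mid\sigma\in M(\mathbb{T}_n(X))\}$. The partial order $\leq_{\mathbb{T}_n(X)}$ is defined recursively: $\overline x\leq t$ iff either $t=\overline y$ with $x\leq_X y$, or $t=j\star[t_0,\dots,t_{m-1}]$ and $\overline x\leq t_l$ for some $l<m$; $i\star\sigma\leq t$ iff either $t=i\star\tau$ with $\sigma\leq_{M(\mathbb{T}_n(X))}\tau$, or $t=j\star[t_0,\dots,t_{m-1}]$ with $j\geq i$ and $i\star\sigma\leq t_l$ for some $l<m$; $\mathbb{T}_n^-(X)$ carries the restricted order. (On quasi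 embeddings $f$, $\mathbb{T}_n(f)$ relabels leaves $\overline x\mapsto\overline{f(x)}$; supports are $\operatorname{supp}^{\mathbb{T}_n}_X(\overline x)=\{x\}$, $\operatorname{supp}^{\mathbb{T}_n}_X(i\star[t_0,\dots,t_{m-1}])=\bigcup_l\operatorname{supp}^{\mathbb{T}_n}_X(t_l)$; with these, $\mathbb{T}_n$ and $\mathbb{T}_{n+1}^-$ are normal PO-dilators. A WPO-dilator is a PO-dilator $W$ such that $W(X)$ is a well partial order whenever $X$ is.) *)

(* Defs.v *)
From Stdlib Require Import List Arith.
Import ListNotations.
Set Implicit Arguments.

Definition is_partial_order (X : Type) (le : X -> X -> Prop) : Prop :=
  (forall x, le x x) /\
  (forall x y z, le x y -> le y z -> le x z) /\
  (forall x y, le x y -> le y x -> x = y).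

Definition good_on (T : Type) (A : T -> Prop) (le : T -> T -> Prop) : Prop :=
  forall f : nat -> T, (forall k, A (f k)) ->
    exists i j, i < j /\ le (f i) (f j).

Definition is_wpo (X : Type) (le : X -> X -> Prop) : Prop :=
  is_partial_order le /\ good_on (fun _ => True) le.

(* Raw terms: leaves  \overline x  and nodes  i * [t_0,...,t_{m-1}],
   the multiset being represented by a list (order of entries irrelevant
   for the order relation below). *)
Inductive tree (X : Type) : Type :=
| Leaf : X -> tree X
| Node : nat -> list (tree X) -> tree X.
Arguments Leaf {X}.
Arguments Node {X}.

Inductive inT (X : Type) (n : nat) : tree X -> Prop :=
| inT_leaf : forall x, inT n (Leaf x)
| inT_node : forall i ts, i < n -> (forall t, In t ts -> inT n t) ->
    inT n (Node i ts).

Definition inTminus (X : Type) (n : nat) (t : tree X) : Prop :=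
  (exists x, t = Leaf x) \/
  (exists ts, t = Node 0 ts /\ forall u, In u ts -> inT n u).

(* The order <=_{T_n(X)}  (it does not depend on n; T_n^- carries the restriction). *)
Inductive tle (X : Type) (leX : X -> X -> Prop) : tree X -> tree X -> Prop :=
| tle_leaf : forall x y, leX x y -> tle leX (Leaf x) (Leaf y)
| tle_leaf_node : forall x j ts t, In t ts -> tle leX (Leaf x) t ->
    tle leX (Leaf x) (Node j ts)
| tle_node : forall i ss ts,
    (exists g : nat -> nat,
      (forall k k', k < length ss -> k' < length ss -> g k = g k' -> k = k') /\
      (forall k, k < length ss -> exists s t,
          nth_error ss k = Some s /\ nth_error ts (g k) = Some t /\ tle leX s t)) ->
    tle leX (Node i ss) (Node i ts)
| tle_node_node : forall i ss j ts t, i <= j -> In t ts ->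
    tle leX (Node i ss) t -> tle leX (Node i ss) (Node j ts).

(* Since the order is invariant
   under permuting multiset entries and is (by the paper) a partial order on
   T_n(X), this says exactly that T_n(X) (the quotient) is a wpo. *)
Definition wqo_on (T : Type) (A : T -> Prop) (le : T -> T -> Prop) : Prop :=
  (forall t, A t -> le t t) /\
  (forall s t u, A s -> A t -> A u -> le s t -> le t u -> le s u) /\
  good_on A le.

(* Main.v *)
Require Import Defs.
From Stdlib Require Import List Arith Lia Classical ClassicalEpsilon.
Import ListNotations.

Definition bad {T} (le : T -> T -> Prop) (f : nat -> T) := forall i j, i < j -> ~ le (f i) (f j).

Lemma not_good_bad {T} (A : T -> Prop) le : ~ good_on A le -> exists f, (forall k, A (f k)) /\ bad le f.
Proof.
  intros H. apply not_all_ex_not in H as [f Hf].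
  apply imply_to_and in Hf as [HA Hn].
  exists f; split; auto. intros i j Hij Hle. apply Hn. eauto.
Qed.

Lemma good_mono {T} (A A' : T -> Prop) le' : (forall t, A t -> A' t) -> good_on A' le' -> good_on A le'.
Proof. intros H HA f Hf. apply HA. auto. Qed.

Lemma incr_strict (phi : nat -> nat) : (forall n, phi n < phi (S n)) -> forall i j, i < j -> phi i < phi j.
Proof. intros H i j Hij. induction Hij. apply H. specialize (H m). lia. Qed.

Fixpoint iterf (c : nat -> nat) (N n : nat) : nat := match n with 0 => N | S n => c (iterf c N n) end.

Lemma subseq_exists (P : nat -> Prop) : (forall N, exists i, N <= i /\ P i) ->
  exists phi : nat -> nat, (forall i, P (phi i)) /\ (forall i j, i < j -> phi i < phi j).
Proof.
  intros H.
  set (c := fun N => proj1_sig (constructive_indefinite_description _ (H N))).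
  assert (Hc : forall N, N <= c N /\ P (c N)).
  { intro N; unfold c; destruct (constructive_indefinite_description _ _); auto. }
  exists (iterf (fun p => c (S p)) (c 0)). split.
  - intros [|i]; simpl; apply Hc.
  - apply incr_strict. intro n. simpl. destruct (Hc (S (iterf (fun p => c (S p)) (c 0) n))). lia.
Qed.

Lemma nat_min_exists (phi : nat -> nat) : exists k0, forall k, phi k0 <= phi k.
Proof.
  assert (H : forall n k, phi k <= n -> exists k0, forall k, phi k0 <= phi k).
  { induction n as [|n IH]; intros k Hk.
    - exists k. intros. lia.
    - destruct (classic (exists k', phi k' <= n)) as [[k' Hk']|Hno].
      + eauto.
      + exists k. intros k'. destruct (le_lt_dec (phi k) (phi k')); auto.
        exfalso. apply Hno. exists k'. lia. }
  apply (H (phi 0) 0). lia.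
Qed.

Section MBS.
Variables (T : Type) (A : T -> Prop) (le : T -> T -> Prop) (sz : T -> nat).

Definition ext (n : nat) (p : nat -> T) := exists g, (forall k, A (g k)) /\ bad le g /\ (forall k, k < n -> g k = p k).
Definition upd (p : nat -> T) (n : nat) (x : T) := fun k => if Nat.eqb k n then x else p k.

Lemma mbs : ~ good_on A le -> exists f, (forall k, A (f k)) /\ bad le f /\
  (forall i g, (forall k, A (g k)) -> bad le g -> (forall k, k < i -> g k = f k) -> sz (f i) <= sz (g i)).
Proof.
  intro Hng. destruct (not_good_bad _ _ Hng) as [g0 [Hg0A Hg0b]].
  assert (Hnext : forall n p, exists x, ext n p -> ext (S n) (upd p n x) /\ forall y, ext (S n) (upd p n y) -> sz x <= sz y).
  { intros n p. destruct (classic (ext n p)) as [He|He].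
    - assert (Hex : exists m y, ext (S n) (upd p n y) /\ sz y = m).
      { destruct He as [g [HgA [Hgb Hgp]]]. exists (sz (g n)), (g n). split; auto.
        exists g. repeat split; auto. intros k Hk. unfold upd. destruct (Nat.eqb_spec k n). subst; auto. apply Hgp. lia. }
      assert (Hmin : forall m y, ext (S n) (upd p n y) -> sz y <= m -> exists x, ext (S n) (upd p n x) /\ forall y, ext (S n) (upd p n y) -> sz x <= sz y).
      { induction m as [|m IH]; intros y Hy Hsz.
        - exists y. split; auto. intros. lia.
        - destruct (classic (exists y', ext (S n) (upd p n y') /\ sz y' <= m)) as [[y' [Hy' Hs']]|Hno].
          + eauto.
          + exists y. split; auto. intros y' Hy'. destruct (le_lt_dec (sz y) (sz y')); auto. exfalso; apply Hno; exists y'; split; auto; lia. }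
      destruct Hex as [m [y [Hy Hm]]]. destruct (Hmin m y Hy) as [x Hx]. lia. exists x. auto.
    - exists (g0 0). intro; contradiction. }
  set (next := fun n p => proj1_sig (constructive_indefinite_description _ (Hnext n p))).
  assert (Hnx : forall n p, ext n p -> ext (S n) (upd p n (next n p)) /\ forall y, ext (S n) (upd p n y) -> sz (next n p) <= sz y).
  { intros n p. unfold next. destruct (constructive_indefinite_description _ _). simpl. auto. }
  set (F := nat_rect (fun _ => nat -> T) (fun _ => g0 0) (fun n p => upd p n (next n p))).
  assert (HF : forall n, F (S n) = upd (F n) n (next n (F n))) by reflexivity.
  assert (Hext : forall n, ext n (F n)).
  { induction n. exists g0. repeat split; auto. intros; lia. rewrite HF. apply Hnx. auto. }
  assert (Hstab : forall n k, k < n -> F n k = F (S n) k).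
  { intros n k Hk. rewrite HF. unfold upd. destruct (Nat.eqb_spec k n); auto; lia. }
  assert (Hstab2 : forall n j k, k < n -> F n k = F (n + j) k).
  { intros n j k Hk. induction j. rewrite Nat.add_0_r; auto. rewrite IHj, Nat.add_succ_r. apply Hstab. lia. }
  set (f := fun i => F (S i) i).
  assert (Hf : forall n k, k < n -> F n k = f k).
  { intros n k Hk. unfold f. replace n with (S k + (n - S k)) by lia. symmetry. apply Hstab2. lia. }
  exists f. split; [|split].
  - intro k. destruct (Hext (S k)) as [g [HgA [_ Hgp]]]. rewrite <- (Hf (S k)) by lia. rewrite <- Hgp by lia. auto.
  - intros i j Hij. destruct (Hext (S j)) as [g [_ [Hgb Hgp]]]. rewrite <- (Hf (S j) i), <- (Hf (S j) j) by lia. rewrite <- !Hgp by lia. auto.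
  - intros i g HgA Hgb Hgf.
    assert (Hf_i : f i = next i (F i)). { unfold f. rewrite HF. unfold upd. rewrite Nat.eqb_refl. reflexivity. }
    rewrite Hf_i. apply (proj2 (Hnx i (F i) (Hext i))).
    exists g. repeat split; auto. intros k Hk. unfold upd. destruct (Nat.eqb_spec k i). subst; auto. rewrite Hf by lia. apply Hgf. lia.
Qed.
End MBS.

Section Prod.
Variables (T : Type) (A : T -> Prop) (le : T -> T -> Prop).
Hypothesis Htr : forall a b c, A a -> A b -> A c -> le a b -> le b c -> le a c.
Hypothesis Hg : good_on A le.

Lemma ascending (x : nat -> T) : (forall k, A (x k)) -> exists phi : nat -> nat, (forall i j, i < j -> phi i < phi j) /\ (forall i j, i < j -> le (x (phi i)) (x (phi j))).
Proof.
  intros HA.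
  assert (HN : exists N, forall i, N <= i -> exists j, i < j /\ le (x i) (x j)).
  { apply NNPP. intro Hn.
    assert (H : forall N, exists i, N <= i /\ forall j, i < j -> ~ le (x i) (x j)).
    { intro N. apply NNPP; intro H1. apply Hn. exists N. intros i Hi. apply NNPP; intro H2. apply H1. exists i. split; auto. intros j Hj Hle. apply H2. eauto. }
    destruct (subseq_exists _ H) as [psi [Hp Hinc]].
    destruct (Hg (fun k => x (psi k))) as [a [b [Hab Hle]]]; auto.
    eapply Hp; [|exact Hle]. auto. }
  destruct HN as [N HN].
  assert (Hc : forall i, exists j, N <= i -> i < j /\ le (x i) (x j)).
  { intro i. destruct (le_lt_dec N i) as [l|l]. destruct (HN i l) as [j Hj]. exists j; auto. exists 0. intro; lia. }
  set (c := fun i => proj1_sig (constructive_indefinite_description _ (Hc i))).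
  assert (Hcs : forall i, N <= i -> i < c i /\ le (x i) (x (c i))).
  { intro i. unfold c. destruct (constructive_indefinite_description _ _). auto. }
  exists (iterf c N).
  assert (HN' : forall n, N <= iterf c N n). { induction n; simpl; auto. destruct (Hcs _ IHn); lia. }
  assert (Hs : forall n, iterf c N n < iterf c N (S n) /\ le (x (iterf c N n)) (x (iterf c N (S n)))).
  { intro n. simpl. apply Hcs. auto. }
  split.
  - apply incr_strict. intro n. apply Hs.
  - intros i j Hij. induction Hij.
    + apply Hs.
    + eapply Htr; [auto|auto|auto|exact IHHij|apply Hs].
Qed.

Lemma good_prod (T' : Type) (B : T' -> Prop) (le' : T' -> T' -> Prop) : good_on B le' ->
  forall (x : nat -> T) (y : nat -> T'), (forall k, A (x k)) -> (forall k, B (y k)) -> exists i j, i < j /\ le (x i) (x j) /\ le' (y i) (y j).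
Proof.
  intros HB x y HA HyB. destruct (ascending x HA) as [phi [Hinc Hasc]].
  destruct (HB (fun k => y (phi k))) as [a [b [Hab Hle]]]; auto.
  exists (phi a), (phi b). auto.
Qed.
End Prod.

Inductive emb {T} (le : T -> T -> Prop) : list T -> list T -> Prop :=
| emb_nil : forall l, emb le [] l
| emb_cons : forall a b l l', le a b -> emb le l l' -> emb le (a :: l) (b :: l')
| emb_skip : forall b l l', emb le l l' -> emb le l (b :: l').

Section Higman.
Variables (T : Type) (A : T -> Prop) (le : T -> T -> Prop).
Hypothesis Htr : forall a b c, A a -> A b -> A c -> le a b -> le b c -> le a c.
Hypothesis Hg : good_on A le.
Definition allA (l : list T) := forall x, In x l -> A x.

Theorem higman : good_on allA (emb le).
Proof.
  apply NNPP. intro Hng.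
  destruct (mbs _ allA (emb le) (@length T) Hng) as [f [HfA [Hfb Hfmin]]].
  assert (Hne : forall i, f i <> []).
  { intros i He. apply (Hfb i (S i)); auto. rewrite He. constructor. }
  destruct (f 0) as [|x0 l0] eqn:E0; [exfalso; apply (Hne 0); auto|].
  set (a := fun i => hd x0 (f i)). set (r := fun i => tl (f i)).
  assert (Hfar : forall i, f i = a i :: r i).
  { intro i. unfold a, r. destruct (f i) eqn:E; [exfalso; apply (Hne i); auto|reflexivity]. }
  set (R := fun l => exists i, l = r i).
  assert (HR : good_on R (emb le)).
  { apply NNPP. intro HnR. destruct (not_good_bad _ _ HnR) as [h [HhR Hhb]].
    set (phi := fun k => proj1_sig (constructive_indefinite_description _ (HhR k))).
    assert (Hphi : forall k, h k = r (phi k)).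
    { intro k. unfold phi. destruct (constructive_indefinite_description _ _). auto. }
    destruct (nat_min_exists phi) as [k0 Hk0].
    set (g := fun i => if i <? phi k0 then f i else h (k0 + (i - phi k0))).
    assert (Hmin := Hfmin (phi k0) g).
    assert (Hlen : length (g (phi k0)) < length (f (phi k0))).
    { unfold g. rewrite Nat.ltb_irrefl, Nat.sub_diag, Nat.add_0_r, Hphi, (Hfar (phi k0)). simpl. lia. }
    enough (length (f (phi k0)) <= length (g (phi k0))) by lia.
    apply Hmin.
    - intro k. unfold g. destruct (k <? phi k0); auto. rewrite Hphi. intros x Hx.
      apply (HfA (phi (k0 + (k - phi k0)))). rewrite Hfar. right. auto.
    - intros i j Hij. unfold g. destruct (Nat.ltb_spec i (phi k0)), (Nat.ltb_spec j (phi k0)).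
      + apply Hfb; auto.
      + intro He. rewrite Hphi in He. apply (Hfb i (phi (k0 + (j - phi k0)))).
        specialize (Hk0 (k0 + (j - phi k0))). lia. rewrite (Hfar (phi (k0 + (j - phi k0)))). apply emb_skip. auto.
      + lia.
      + apply Hhb. lia.
    - intros k Hk. unfold g. destruct (Nat.ltb_spec k (phi k0)); auto; lia. }
  destruct (good_prod T A le Htr Hg _ R (emb le) HR a r) as [i [j [Hij [H1 H2]]]].
  - intro k. apply (HfA k). rewrite Hfar. left; auto.
  - intro k. exists k. auto.
  - apply (Hfb i j Hij). rewrite !Hfar. constructor; auto.
Qed.
End Higman.

Lemma emb_inj {T} (le : T -> T -> Prop) ss ts : emb le ss ts ->
  exists g : nat -> nat,
    (forall k k', k < length ss -> k' < length ss -> g k = g k' -> k = k') /\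
    (forall k, k < length ss -> exists s t, nth_error ss k = Some s /\ nth_error ts (g k) = Some t /\ le s t).
Proof.
  induction 1 as [l|a b l l' Hab H [g [Hi Hp]]|b l l' H [g [Hi Hp]]].
  - exists (fun k => k). simpl. split; intros; lia.
  - exists (fun k => match k with 0 => 0 | S k => S (g k) end). split.
    + intros [|k] [|k'] Hk Hk' E; simpl in *; try lia. f_equal. apply Hi; lia.
    + intros [|k] Hk; simpl in *. exists a, b; auto. apply Hp. lia.
  - exists (fun k => S (g k)). split.
    + intros k k' Hk Hk' E. apply Hi; auto.
    + intros k Hk. apply Hp. auto.
Qed.

Fixpoint tsize {X} (t : tree X) : nat := match t with Leaf _ => 1 | Node _ ts => S (list_sum (map tsize ts)) end.

Lemma In_size {X} i (t : tree X) ts : In t ts -> tsize t < tsize (Node i ts).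
Proof.
  induction ts as [|a ts IH]; simpl; [tauto|]. intros [->|H]. lia. specialize (IH H). simpl in IH. lia.
Qed.

Lemma tsize_pos {X} (t : tree X) : 0 < tsize t.
Proof. destruct t; simpl; lia. Qed.

Lemma tle_refl X (leX : X -> X -> Prop) : (forall x, leX x x) -> forall t, tle leX t t.
Proof.
  intros Hr. assert (H : forall n t, tsize t <= n -> tle leX t t).
  { induction n; intros t Ht. pose proof (tsize_pos t); lia.
    destruct t as [x|i ts]. constructor; auto.
    constructor. exists (fun k => k). split; auto. intros k Hk.
    destruct (nth_error ts k) as [s|] eqn:E.
    - exists s, s. repeat split; auto. apply IHn. apply nth_error_In in E. pose proof (In_size i _ _ E). lia.
    - apply nth_error_None in E. lia. }
  intro t. apply (H (tsize t)). lia.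
Qed.

Lemma tle_node_inv X (leX : X -> X -> Prop) i ss t : tle leX (Node i ss) t -> exists j ts, t = Node j ts /\ i <= j.
Proof. intros H. inversion H; subst; eauto. Qed.

Lemma tle_trans X (leX : X -> X -> Prop) : (forall x y z, leX x y -> leX y z -> leX x z) ->
  forall s t u, tle leX s t -> tle leX t u -> tle leX s u.
Proof.
  intros Htr.
  assert (H : forall n u s t, tsize u <= n -> tle leX s t -> tle leX t u -> tle leX s u).
  { induction n; intros u s t Hu Hst Htu. pose proof (tsize_pos u); lia.
    destruct Htu as [y z Hyz | y j us u' Hin Hyu | i ts us Hg | i ts j us u' Hij Hin Htu'].
    - inversion Hst; subst. constructor. eapply Htr; eauto.
    - inversion Hst; subst. apply tle_leaf_node with u'; auto. apply IHn with (Leaf y); auto.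
      pose proof (In_size j _ _ Hin). lia.
    - destruct Hg as [g [Hinj Hpairs]].
      inversion Hst; subst.
      + rename H2 into Hin0, H3 into Hx.
        destruct (In_nth_error _ _ Hin0) as [k Hk].
        assert (Hkl : k < length ts) by (apply nth_error_Some; congruence).
        destruct (Hpairs k Hkl) as [s' [t' [E1 [E2 Hst']]]]. rewrite Hk in E1. injection E1 as <-.
        apply tle_leaf_node with t'. eapply nth_error_In; eauto.
        apply IHn with t; auto. pose proof (In_size i _ _ (nth_error_In _ _ E2)). lia.
      + rename H1 into Hg'. destruct Hg' as [g' [Hinj' Hpairs']].
        constructor. exists (fun k => g (g' k)). split.
        * intros k k' Hk Hk' E.
          destruct (Hpairs' k Hk) as [a1 [b1 [_ [E1 _]]]].
          destruct (Hpairs' k' Hk') as [a2 [b2 [_ [E2 _]]]].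
          apply Hinj'; auto. apply Hinj; auto; apply nth_error_Some; congruence.
        * intros k Hk. destruct (Hpairs' k Hk) as [a1 [b1 [E1 [E2 H12]]]].
          assert (Hgk : g' k < length ts) by (apply nth_error_Some; congruence).
          destruct (Hpairs _ Hgk) as [b2 [c [E3 [E4 H23]]]]. rewrite E2 in E3. injection E3 as <-.
          exists a1, c. repeat split; auto. apply IHn with b1; auto.
          pose proof (In_size i _ _ (nth_error_In _ _ E4)). lia.
      + rename H3 into Hin0, H4 into Hs0.
        destruct (In_nth_error _ _ Hin0) as [k Hk].
        assert (Hkl : k < length ts) by (apply nth_error_Some; congruence).
        destruct (Hpairs k Hkl) as [s' [t' [E1 [E2 Hst']]]]. rewrite Hk in E1. injection E1 as <-.
        apply tle_node_node with t'; auto. eapply nth_error_In; eauto.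
        apply IHn with t; auto. pose proof (In_size i _ _ (nth_error_In _ _ E2)). lia.
    - assert (Hsu : tle leX s u'). { apply IHn with (Node i ts); auto. pose proof (In_size j _ _ Hin). lia. }
      destruct s as [x|i' ss].
      + apply tle_leaf_node with u'; auto.
      + destruct (tle_node_inv _ _ _ _ _ Hst) as [j0 [ts0 [E Hle]]]. injection E as <- <-.
        apply tle_node_node with u'; auto. lia. }
  intros s t u. apply (H (tsize u)). lia.
Qed.

Section Gap.
Variables (X : Type) (leX : X -> X -> Prop).
Hypothesis Hrefl : forall x, leX x x.
Hypothesis Htrans : forall x y z, leX x y -> leX y z -> leX x z.
Notation le := (tle leX).

Inductive G (k N : nat) (B : tree X -> Prop) : tree X -> Prop :=
| G_base : forall t, B t -> G k N B t
| G_node : forall j ts, k <= j -> j < N -> (forall t, In t ts -> G k N B t) -> G k N B (Node j ts).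

Definition lowroot (k : nat) (t : tree X) : Prop := match t with Leaf _ => True | Node i _ => i < k end.

Lemma lowroot_mono a b t : a <= b -> lowroot a t -> lowroot b t.
Proof. destruct t; simpl; auto; lia. Qed.

Definition IHgap (m : nat) := forall k B, (forall t, B t -> lowroot k t) -> good_on B le -> good_on (G k (k + m) B) le.

Lemma G_mono k N B B' : (forall t, B t -> B' t) -> forall t, G k N B t -> G k N B' t.
Proof. intros HB t Ht. induction Ht; [apply G_base; auto | apply G_node; auto]. Qed.

Lemma G_node_inv k N B j ts : G k N B (Node j ts) -> B (Node j ts) \/ forall t, In t ts -> G k N B t.
Proof. intros H. inversion H; subst; auto. Qed.

Inductive piece (k : nat) : tree X -> tree X -> Prop :=
| piece_self : forall t, piece k t t
| piece_down : forall t j us v, k < j -> In v us -> piece k t v -> piece k t (Node j us).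

Lemma piece_size k e u : piece k e u -> tsize e <= tsize u.
Proof. induction 1. lia. pose proof (In_size j _ _ H0). lia. Qed.

Lemma tle_up e j ts u : In u ts -> le e u -> lowroot (S j) e -> le e (Node j ts).
Proof. destruct e; simpl; intros. eapply tle_leaf_node; eauto. eapply tle_node_node; eauto. lia. Qed.

Lemma piece_le k e u : piece k e u -> lowroot (S k) e -> le e u.
Proof.
  induction 1; intros Hl. apply tle_refl; auto.
  apply tle_up with v; auto. eapply lowroot_mono; [|exact Hl]. lia.
Qed.

Definition Dset k m B t := G k (k + S m) B t /\ (B t \/ exists ts, t = Node k ts).

Lemma Dset_low k m B : (forall t, B t -> lowroot k t) -> forall e, Dset k m B e -> lowroot (S k) e.
Proof.
  intros Hl e [_ [HB|[ts ->]]]. eapply lowroot_mono; [|apply Hl; auto]. lia. simpl. lia.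
Qed.

Lemma decomp k m B : forall u, G k (k + S m) B u -> G (S k) (S k + m) (fun t => Dset k m B t /\ piece k t u) u.
Proof.
  intros u Hu. induction Hu as [t Ht|j ts Hkj Hjn Hts IH].
  - apply G_base. split; [|constructor]. split; [apply G_base; auto|left; auto].
  - destruct (Nat.eq_dec j k) as [->|Hne].
    + apply G_base. split; [|constructor]. split; [apply G_node; auto|right; eauto].
    + apply G_node; try lia. intros t Ht. eapply G_mono; [|apply IH; auto].
      intros e [HD Hp]. split; auto. apply piece_down with t; auto. lia.
Qed.

Lemma G_shift k m B : forall t, G k (k + S m) B t -> G (S k) (S k + m) (Dset k m B) t.
Proof.
  intros t Ht. induction Ht as [t Ht|j ts Hkj Hjn Hts IH].
  - apply G_base. split; [apply G_base; auto|left; auto].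
  - destruct (Nat.eq_dec j k) as [->|Hne].
    + apply G_base. split; [apply G_node; auto|right; eauto].
    + apply G_node; auto; lia.
Qed.

Definition children (t : tree X) := match t with Leaf _ => [] | Node _ ts => ts end.

Lemma D_good m : IHgap m -> forall k B, (forall t, B t -> lowroot k t) -> good_on B le -> good_on (Dset k m B) le.
Proof.
  intros IH k B Hlow HB. apply NNPP. intro Hng.
  destruct (mbs _ (Dset k m B) le (@tsize X) Hng) as [d [HdD [Hdb Hdmin]]].
  set (D' := fun e => exists i ts u, d i = Node k ts /\ In u ts /\ Dset k m B e /\ piece k e u).
  assert (HD'le : forall e i ts u, d i = Node k ts -> In u ts -> Dset k m B e -> piece k e u -> le e (d i) /\ tsize e < tsize (d i)).
  { intros e i ts u E Hin HD Hp. rewrite E. split.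
    - apply tle_up with u; auto. apply piece_le with k; auto. eapply Dset_low; eauto.
      eapply lowroot_mono; [|eapply Dset_low; eauto]. lia.
    - pose proof (piece_size _ _ _ Hp). pose proof (In_size k _ _ Hin). lia. }
  assert (HD' : good_on D' le).
  { apply NNPP. intro Hn. destruct (not_good_bad _ _ Hn) as [h [HhD Hhb]].
    set (phi := fun k' => proj1_sig (constructive_indefinite_description _ (HhD k'))).
    assert (Hphi : forall k', exists ts u, d (phi k') = Node k ts /\ In u ts /\ Dset k m B (h k') /\ piece k (h k') u).
    { intro k'. unfold phi. destruct (constructive_indefinite_description _ _). simpl. auto. }
    destruct (nat_min_exists phi) as [k0 Hk0].
    set (g := fun i => if i <? phi k0 then d i else h (k0 + (i - phi k0))).
    enough (tsize (d (phi k0)) <= tsize (g (phi k0))) as Hs.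
    { unfold g in Hs. rewrite Nat.ltb_irrefl, Nat.sub_diag, Nat.add_0_r in Hs.
      destruct (Hphi k0) as [ts [u [E [Hin [HD Hp]]]]]. destruct (HD'le _ _ _ _ E Hin HD Hp). lia. }
    apply Hdmin.
    - intro i. unfold g. destruct (i <? phi k0); auto. destruct (Hphi (k0 + (i - phi k0))) as [ts [u [_ [_ [HD _]]]]]. auto.
    - intros i j Hij. unfold g. destruct (Nat.ltb_spec i (phi k0)), (Nat.ltb_spec j (phi k0)).
      + apply Hdb; auto.
      + intro Hle. set (k' := k0 + (j - phi k0)) in *. destruct (Hphi k') as [ts [u [E [Hin [HD Hp]]]]].
        destruct (HD'le _ _ _ _ E Hin HD Hp) as [Hle2 _].
        apply (Hdb i (phi k')). specialize (Hk0 k'). lia.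
        exact (tle_trans _ _ Htrans _ _ _ Hle Hle2).
      + lia.
      + apply Hhb. lia.
    - intros i Hi. unfold g. destruct (Nat.ltb_spec i (phi k0)); auto; lia. }
  assert (HGD' : good_on (G (S k) (S k + m) D') le).
  { apply IH; auto. intros e [i [ts [u [_ [_ [HD _]]]]]]. eapply Dset_low; eauto. }
  destruct (classic (forall N, exists i, N <= i /\ B (d i))) as [Hinf|Hfin].
  - destruct (subseq_exists _ Hinf) as [psi [HpB Hinc]].
    destruct (HB (fun a => d (psi a))) as [a [b [Hab Hle]]]; auto. apply (Hdb (psi a) (psi b)); auto.
  - assert (HN : exists N, forall i, N <= i -> ~ B (d i)).
    { apply NNPP; intro H; apply Hfin; intro N; apply NNPP; intro H2; apply H; exists N; intros i Hi HBi; apply H2; eauto. }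
    destruct HN as [N HN].
    assert (Hnode : forall i, N <= i -> d i = Node k (children (d i))).
    { intros i Hi. destruct (HdD i) as [_ [HBi|[ts E]]]. exfalso; eapply HN; eauto. rewrite E; reflexivity. }
    assert (Hch : forall i, N <= i -> allA _ (G (S k) (S k + m) D') (children (d i))).
    { intros i Hi u Hu.
      destruct (HdD i) as [HG _]. rewrite (Hnode i Hi) in HG.
      destruct (G_node_inv _ _ _ _ _ HG) as [HBn|Hc].
      - exfalso. eapply HN; eauto. rewrite Hnode; auto.
      - eapply G_mono; [|apply decomp; apply Hc; auto].
        intros e [HDe Hp]. exists i, (children (d i)), u. split; [auto|split; [auto|split; auto]]. }
    destruct (higman _ (G (S k) (S k + m) D') le) with (f := fun a => children (d (N + a))) as [a [b [Hab Hemb]]].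
    + intros; eapply tle_trans; eauto.
    + auto.
    + intro a. apply Hch. lia.
    + apply (Hdb (N+a) (N+b)). lia.
      pose proof (Hnode (N+a) ltac:(lia)) as Ea. pose proof (Hnode (N+b) ltac:(lia)) as Eb.
      revert Hemb Ea Eb. generalize (children (d (N + a))) (children (d (N + b))).
      intros ca cb Hemb -> ->. constructor. apply emb_inj. auto.
Qed.

Lemma gap_main : forall m, IHgap m.
Proof.
  induction m.
  - intros k B Hlow HB. eapply good_mono; [|exact HB]. intros t Ht. destruct Ht; auto. lia.
  - intros k B Hlow HB.
    eapply good_mono; [|apply (IHm (S k) (Dset k m B))].
    + apply G_shift.
    + apply Dset_low; auto.
    + apply D_good; auto.
Qed.

End Gap.

Lemma inT_G X n (L : tree X -> Prop) : (forall x, L (Leaf x)) -> forall t, inT n t -> G X 0 n L t.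
Proof. intros HL t Ht. induction Ht. apply G_base; auto. apply G_node; auto; lia. Qed.

Theorem corollary6p6 :
  forall (n : nat) (X : Type) (leX : X -> X -> Prop),
    is_wpo leX ->
    wqo_on (inT n) (tle leX) /\ wqo_on (inTminus (S n)) (tle leX).
Proof.
  intros n X leX [[Hr [Ht _]] Hg].
  set (L := fun t : tree X => exists x, t = Leaf x).
  assert (HL : good_on L (tle leX)).
  { intros f Hf. set (x := fun k => proj1_sig (constructive_indefinite_description _ (Hf k))).
    assert (Hx : forall k, f k = Leaf (x k)). { intro k. unfold x. destruct (constructive_indefinite_description _ _). auto. }
    destruct (Hg x) as [i [j [Hij Hle]]]. intros; auto. exists i, j. split; auto. rewrite (Hx i), (Hx j). constructor; auto. }
  assert (HLlow : forall t, L t -> lowroot X 0 t). { intros t [x ->]. simpl; auto. }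
  assert (HLl : forall x, L (Leaf x)) by (intro x; exists x; auto).
  split; split; [| split | | split].
  - intros; apply tle_refl; auto.
  - intros s t u _ _ _ H1 H2. eapply tle_trans; eauto.
  - eapply good_mono; [|apply (gap_main X leX Hr Ht n 0 L HLlow HL)]. intros t Hin. apply inT_G; auto.
  - intros; apply tle_refl; auto.
  - intros s t u _ _ _ H1 H2. eapply tle_trans; eauto.
  - eapply good_mono; [|apply (D_good X leX Hr Ht n (gap_main X leX Hr Ht n) 0 L HLlow HL)].
    intros t [[x ->]|[ts [-> Hts]]].
    + split. apply G_base. eauto. left; eauto.
    + split. apply G_node; [lia|lia|]. intros u Hu. apply inT_G; auto. right; eauto.
Qed.
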